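(* Let $A$ be a $2r\times2r$ integer matrix. Then $A$ is (integrally) null-cobordant if and only if it is rationally null-cobordant.
   Context: $'$ denotes transpose. A $2r\times 2r$ integer matrix $A$ is null-cobordant if there is $P\in GL_{2r}(\mathbb Z)$ with $P'AP=\begin{pmatrix}0&N_1\\N_2&N_3\end{pmatrix}$, each $N_i$ an $r\times r$ block; a $2r\times2r$ rational matrix $A$ is rationally null-cobordant if such a $P$ exists in $GL_{2r}(\mathbb Q)$ (equivalently, the bilinear form $(x,y)\mapsto x'Ay$ on $\mathbb Q^{2r}$ vanishes on some $r$-dimensional subspace). *)

(* Defs.v *)
From mathcomp Require Import all_boot all_order all_algebra.
Set Implicit Arguments. Unset Strict Implicit. Unset Printing Implicit Defensive.
Import GRing.Theory Num.Theory.
Local Open Scope ring_scope.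

Definition null_cobordant (r : nat) (A : 'M[int]_(r + r)) : Prop :=
  exists P : 'M[int]_(r + r), P \in unitmx /\
    exists N1 N2 N3 : 'M[int]_r, P^T *m A *m P = block_mx 0 N1 N2 N3.

Definition rat_null_cobordant (r : nat) (A : 'M[rat]_(r + r)) : Prop :=
  exists P : 'M[rat]_(r + r), P \in unitmx /\
    exists N1 N2 N3 : 'M[rat]_r, P^T *m A *m P = block_mx 0 N1 N2 N3.

(* Main.v *)
Require Import Defs.
From mathcomp Require Import all_boot all_order all_algebra.
Local Open Scope ring_scope.
Import GRing.Theory Num.Theory.

Lemma mapZ_inj m n (A B : 'M[int]_(m,n)) :
  map_mx (intr : int -> rat) A = map_mx intr B -> A = B.
Proof.
move=> H; apply/matrixP => i j; have := congr1 (fun M : 'M[rat]_(m,n) => M i j) H.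
by rewrite !mxE; apply: intr_inj.
Qed.

Lemma scale_int m n (Q : 'M[rat]_(m,n)) :
  exists c : int, c != 0 /\ exists M : 'M[int]_(m,n), map_mx intr M = c%:~R *: Q.
Proof.
exists (\prod_(k : 'I_m * 'I_n) denq (Q k.1 k.2)); split.
  by apply/prodf_neq0 => k _; apply: denq_neq0.
exists (\matrix_(i,j) (numq (Q i j) * \prod_(k | k != (i,j)) denq (Q k.1 k.2))).
apply/matrixP => i j; rewrite !mxE rmorphM /=.
rewrite numqE.
rewrite [X in _ = X%:~R * _](bigD1 (i,j)) //= rmorphM /=.
by rewrite [RHS]mulrC mulrA.
Qed.

Theorem mainTheorem20 (r : nat) (A : 'M[int]_(r + r)) :
  null_cobordant A <-> rat_null_cobordant (map_mx (fun z : int => z%:~R : rat) A).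
Proof.
have -> : map_mx (fun z : int => z%:~R : rat) A = map_mx intr A by [].
split.
  move=> [P [Pu [N1 [N2 [N3 HP]]]]].
  exists (map_mx intr P); split.
    by rewrite unitmxE det_map_mx rmorph_unit // -unitmxE.
  exists (map_mx intr N1), (map_mx intr N2), (map_mx intr N3).
  by rewrite map_trmx -!map_mxM HP map_block_mx map_mx0.
move=> [P [Pu [N1 [N2 [N3 HP]]]]].
pose AQ := map_mx (intr : int -> rat) A.
change (P^T *m AQ *m P = block_mx 0 N1 N2 N3) in HP.
pose E : 'M[rat]_(r + r, r) := col_mx 1%:M 0.
pose Q := P *m E.
have HQ0 : Q^T *m AQ *m Q = 0.
  rewrite /Q trmx_mul.
  have -> : E^T *m P^T *m AQ *m (P *m E) = E^T *m (P^T *m AQ *m P) *m E by rewrite !mulmxA.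
  rewrite HP /E tr_col_mx trmx1 trmx0.
  by rewrite mul_row_block mul_row_col !mul1mx !mul0mx !addr0 ?mulmx0 ?add0r mul0mx addr0.
have HQinj : forall x : 'cV[rat]_r, Q *m x = 0 -> x = 0.
  move=> x Hx.
  have : E *m x = 0 by rewrite -(mulKmx Pu (E *m x)) (mulmxA P) -/Q Hx mulmx0.
  rewrite /E mul_col_mx mul1mx => /(congr1 usubmx).
  by rewrite col_mxKu => ->; rewrite -(col_mx0 _ r r 1) col_mxKu.
have [c [c0 [M HMc]]] := scale_int _ _ Q.
have HM0 : M^T *m A *m M = 0.
  apply: mapZ_inj; rewrite !map_mxM -map_trmx HMc map_mx0.
  rewrite linearZ /= linearZ /= -!scalemxAl.
  by move: HQ0; rewrite /AQ => ->; rewrite !scaler0.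
have [L Lu [R Ru [d _ HM]]] := int_Smith_normal_form M.
set D := \matrix_(i, j) _ in HM.
have Hd : forall j : 'I_r, d`_j != 0.
  move=> j; apply/negP => /eqP dj0.
  pose x := invmx R *m delta_mx j (0 : 'I_1).
  have HDe : D *m delta_mx j (0 : 'I_1) = 0.
    rewrite -colE; apply/matrixP => i k; rewrite !mxE.
    by case: eqP => [->|_]; rewrite ?dj0 ?mulr0n.
  have Mx : M *m x = 0 by rewrite HM /x -!mulmxA mulKVmx // HDe mulmx0.
  have : map_mx (intr : int -> rat) x = 0.
    apply: HQinj; apply: (@scalerI _ _ (c%:~R)); first by rewrite intr_eq0.
    by rewrite scaler0 scalemxAl -HMc -map_mxM Mx map_mx0.
  rewrite -(map_mx0 (intr : {rmorphism int -> rat})) => /mapZ_inj.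
  move/(congr1 (mulmx R)); rewrite /x mulKVmx // mulmx0 => /matrixP/(_ j 0).
  by rewrite !mxE !eqxx.
pose Dl : 'M[int]_r := diag_mx (\row_i d`_i).
have HD : D = col_mx Dl 0.
  apply/matrixP => i j; rewrite -(splitK i); case: (split i) => k /=.
    by rewrite col_mxEu !mxE.
  rewrite col_mxEd !mxE /= gtn_eqF ?mulr0n //.
  by apply: ltn_addr.
have HLD : (L *m D)^T *m A *m (L *m D) = 0.
  have -> : L *m D = M *m invmx R by rewrite HM mulmxK.
  rewrite trmx_mul.
  have -> : (invmx R)^T *m M^T *m A *m (M *m invmx R) = (invmx R)^T *m (M^T *m A *m M) *m invmx R by rewrite !mulmxA.
  by rewrite HM0 mulmx0 mul0mx.
set B := L^T *m A *m L.
have HB : Dl *m ulsubmx B *m Dl = 0.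
  move: HLD; rewrite trmx_mul.
  have -> : D^T *m L^T *m A *m (L *m D) = D^T *m B *m D by rewrite /B !mulmxA.
  rewrite HD -[B]submxK tr_col_mx tr_diag_mx trmx0 mul_row_block.
  rewrite mul_row_col !mul0mx !mulmx0 !addr0 block_mxKul => H; exact: H.
have Hul : ulsubmx B = 0.
  apply/matrixP => i j; have := congr1 (fun N : 'M[int]_r => N i j) HB.
  rewrite /Dl mul_diag_mx mul_mx_diag !mxE => /eqP.
  by rewrite !mulf_eq0 (negbTE (Hd i)) (negbTE (Hd j)) orbF /= => /eqP.
exists L; split => //.
by exists (ursubmx B), (dlsubmx B), (drsubmx B); rewrite -Hul submxK.
Qed.
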